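(* Let $d\ge2$, $\lambda>0$, $u>0$ and $\mathbf N\sim\mathrm{NDFHL}^{(d)}(\lambda,u)$. Then the differential entropy satisfies $|h(\mathbf N)|<\infty$.
   Context: For an integer $d\ge2$, $\lambda>0$, $u>0$, $\mathrm{NDFHL}^{(d)}(\lambda,u)$ is the probability law on $\mathbb R^{d-1}$ with density $$f(\mathbf n)=\frac{\lambda}{2^{\frac d2-1}\pi^{\frac d2}}\left(\frac{u}{\rho(\mathbf n)}\right)^{\frac d2}e^{\lambda u}K_{\frac d2}\bigl(u\rho(\mathbf n)\bigr),\quad \rho(\mathbf n)=\sqrt{\|\mathbf n\|^2+\lambda^2},$$ $K_\nu$ the modified Bessel function of the second kind. *)

(* Defs.v *)
From HB Require Import structures.
From mathcomp Require Import all_boot all_order all_algebra.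
From mathcomp Require Import all_classical all_reals all_analysis.
Set Implicit Arguments. Unset Strict Implicit. Unset Printing Implicit Defensive.
Import Order.TTheory GRing.Theory Num.Theory.
Import numFieldNormedType.Exports.
Local Open Scope classical_set_scope.
Local Open Scope ring_scope.

Section Defs.
Variable R : realType.

(* Lebesgue measure on R^n, realised on n.-tuple R (whose canonical
   sigma-algebra is the product = Borel sigma-algebra), defined as the
   iterated integral:  leb_0 = Dirac mass at the empty tuple,
   leb_{n+1}(A) = \int_R leb_n {t | x :: t \in A} dx. *)
Fixpoint lebesgue_tuple (n : nat) : set (n.-tuple R) -> \bar R :=
  match n return set (n.-tuple R) -> \bar R with
  | 0 => fun A => (\1_A [tuple] : R)%:E
  | n'.+1 => fun A =>
      (\int[@lebesgue_measure R]_x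
          lebesgue_tuple [set t : n'.-tuple R | A [tuple of x :: t]])%E
  end.

Definition cosh (t : R) : R := (expR t + expR (- t)) / 2.

Definition besselK (nu x : R) : R :=
  fine (\int[@lebesgue_measure R]_(t in `[0%R, +oo[%classic)
          (expR (- x * cosh t) * cosh (nu * t))%:E)%E.

Definition sqnorm (n : nat) (v : n.-tuple R) : R :=
  \sum_(i < n) (tnth v i) ^+ 2.

Definition ndfhl_density (d : nat) (lam u : R) (v : (d.-1).-tuple R) : R :=
  let rho := Num.sqrt (sqnorm v + lam ^+ 2) in
  let h := d%:R / 2 in
  lam / (2 `^ (h - 1) * pi `^ h) * (u / rho) `^ h * expR (lam * u)
    * besselK h (u * rho).

Definition diff_entropy (n : nat) (f : n.-tuple R -> R) : \bar R :=
  (- \int[@lebesgue_tuple n]_v (f v * ln (f v))%:E)%E.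

End Defs.

Arguments lebesgue_tuple {R} n _.
Arguments ndfhl_density {R} d lam u v.
Arguments diff_entropy {R} n f.

(* Main.v *)
Require Import Defs.
From HB Require Import structures.
From mathcomp Require Import all_boot all_order all_algebra.
From mathcomp Require Import all_classical all_reals all_analysis.
From mathcomp Require Import measurable_realfun.
From mathcomp Require Import ring lra.
Import Order.TTheory GRing.Theory Num.Theory.
Import numFieldNormedType.Exports.
Local Open Scope classical_set_scope.
Local Open Scope ring_scope.

Section Meas.
Variable R : realType.

Definition consf n (p : R * n.-tuple R) : n.+1.-tuple R := [tuple of p.1 :: p.2].
Definition unconsf n (v : n.+1.-tuple R) : R * n.-tuple R := (thead v, [tuple of behead v]).

Arguments consf {n}.
Arguments unconsf {n}.

Lemma measurable_consf n : measurable_fun setT (@consf n).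
Proof. by apply: measurable_cons; [exact: measurable_fst| exact: measurable_snd]. Qed.

Lemma measurable_unconsf n : measurable_fun setT (@unconsf n).
Proof.
apply/measurable_fun_pairP; split.
  exact: (@measurable_tnth _ R n.+1 ord0).
exact: measurable_behead.
Qed.

Lemma consfK n : cancel (@unconsf n) (@consf n).
Proof. by move=> v; rewrite /unconsf /consf /= [in RHS](tuple_eta v). Qed.
Lemma unconsfK n : cancel (@consf n) (@unconsf n).
Proof. by move=> [x t]; rewrite /unconsf /consf /=; congr pair; apply: val_inj. Qed.

Section step.
Variable n : nat.
Variable m : {sigma_finite_measure set (n.-tuple R) -> \bar R}.

Definition ltstep : set (n.+1.-tuple R) -> \bar R :=
  pushforward (@lebesgue_measure R \x m)%E (@consf n).

Let ltstep0 : ltstep set0 = 0%E.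
Proof. by rewrite /ltstep /pushforward preimage_set0 measure0. Qed.

Let ltstep_ge0 A : (0 <= ltstep A)%E.
Proof. rewrite /ltstep /pushforward; exact: measure_ge0. Qed.

Let ltstep_sigma_additive : semi_sigma_additive ltstep.
Proof.
move=> F mF tF mUF; rewrite /ltstep /pushforward preimage_bigcup.
have mf := @measurable_consf n.
apply: measure_semi_sigma_additive.
- by move=> k; rewrite -[X in measurable X]setTI; exact: mf.
- apply/trivIsetP => /= i j _ _ ij; rewrite -preimage_setI.
  by move/trivIsetP : tF => /(_ _ _ _ _ ij) ->//; rewrite preimage_set0.
- by rewrite -preimage_bigcup -[X in measurable X]setTI; exact: mf.
Qed.

HB.instance Definition _ := isMeasure.Build _ _ _ ltstep
  ltstep0 ltstep_ge0 ltstep_sigma_additive.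

Let ltstep_sigma_finite : sigma_finite setT ltstep.
Proof.
have [F FT Fm] : sigma_finite setT (@lebesgue_measure R \x m)%E.
  have /sigma_finiteP[F [TF ndF Foo]] := sigma_finiteT (@lebesgue_measure R).
  have /sigma_finiteP[G [TG ndG Goo]] := sigma_finiteT m.
  exists (fun n => F n `*` G n).
   rewrite -setXTT TF TG predeqE => -[x y]; split.
      move=> [/= [k _ Fnx] [k' _ Gky]]; exists (maxn k k') => //; split.
      - by move: x Fnx; exact/subsetPset/ndF/leq_maxl.
      - by move: y Gky; exact/subsetPset/ndG/leq_maxr.
    by move=> [k _ []/= ? ?]; split; exists k.
  move=> k; have [? ?] := Foo k; have [? ?] := Goo k.
  split; first exact: measurableX.
  by rewrite product_measure1E// lte_mul_pinfty// ge0_fin_numE.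
exists (fun i => (@unconsf n) @^-1` F i).
  by rewrite -preimage_bigcup -FT preimage_setT.
move=> i; have [mFi Fi] := Fm i; split.
  by rewrite -[X in measurable X]setTI; exact: measurable_unconsf.
rewrite /ltstep /pushforward.
have -> : @consf n @^-1` (@unconsf n @^-1` F i) = F i.
  by apply/seteqP; split => p /=; rewrite unconsfK.
by [].
Qed.

HB.instance Definition _ := Measure_isSigmaFinite.Build _ _ _ ltstep
  ltstep_sigma_finite.

End step.
Arguments ltstep {n} m.

Lemma lebesgue_tuple_measure n :
  exists m : {sigma_finite_measure set (n.-tuple R) -> \bar R},
    lebesgue_tuple n = m.
Proof.
elim: n => [|n [m IH]].
  by exists (\d_([tuple] : 0.-tuple R)).
exists (ltstep m); apply/funext => A /=.
rewrite IH /ltstep /pushforward /product_measure1.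
apply: eq_integral => x _ /=; congr (m _).
by apply/seteqP; split => t /=; rewrite /xsection /= inE.
Qed.


Lemma lebesgue_tuple_S n (m : {sigma_finite_measure set (n.-tuple R) -> \bar R}) :
  lebesgue_tuple n = m -> lebesgue_tuple n.+1 = ltstep m.
Proof.
move=> IH; apply/funext => A /=.
rewrite IH /ltstep /pushforward /product_measure1.
apply: eq_integral => x _ /=; congr (m _).
by apply/seteqP; split => t /=; rewrite /xsection /= inE.
Qed.

Lemma integral_ltstep n (m : {sigma_finite_measure set (n.-tuple R) -> \bar R})
  (g : n.+1.-tuple R -> \bar R) : measurable_fun [set: n.+1.-tuple R] g -> (forall v, (0 <= g v)%E) ->
  (\int[ltstep m]_v g v = \int[@lebesgue_measure R]_x \int[m]_t g (consf (x, t)))%E.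
Proof.
move=> mg g0.
rewrite /ltstep ge0_integral_pushforward //; last first.
  exact: measurable_consf.
rewrite preimage_setT fubini_tonelli1 //.
- exact: measurableT_comp mg (@measurable_consf n).
- by move=> p; exact: g0.
Qed.

Definition gexp (c : R) n (v : n.-tuple R) := expR (- c * \sum_(i < n) `|tnth v i|).

Arguments gexp c {n} v.

Lemma measurable_gexp c n : measurable_fun setT (@gexp c n).
Proof.
apply: measurableT_comp; first exact: measurable_expR.
apply: measurable_funM => //; apply: measurable_sum => i.
apply: measurableT_comp; first exact: normr_measurable.
exact: measurable_tnth.
Qed.

Lemma gexp_cons c n x t : gexp c (@consf n (x, t)) = expR (- c * `|x|) * gexp c t.
Proof.
rewrite /gexp big_ord_recl /consf /= tnth0 -expRD mulrDr.
by congr (expR (_ + _)); congr (_ * _); apply: eq_bigr => i _; rewrite tnthS.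
Qed.

Lemma int_expabs c : 0 < c ->
  (\int[@lebesgue_measure R]_x (expR (- c * `|x|))%:E < +oo)%E.
Proof.
move=> c0.
pose p := exponential_pdf c.
have p0 x : 0 <= p x by apply: exponential_pdf_ge0; exact: ltW.
have mp : measurable_fun setT p by apply: measurable_exponential_pdf; exact: ltW.
have mpN : measurable_fun setT (p \o -%R).
  by apply: measurableT_comp => //; exact: oppr_measurable.
have Ip : (\int[@lebesgue_measure R]_x (p x)%:E = 1)%E by exact: integral_exponential_pdf.
have IpN : (\int[@lebesgue_measure R]_x (p (- x))%:E = 1)%E.
  rewrite -Ip.
  have E := @ge0_integral_pushforward _ _ _ _ R (-%R : measurableTypeR R -> measurableTypeR R) (@oppr_measurable R setT)
    (@lebesgue_measure R) setT (EFin \o p) measurableT.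
  rewrite preimage_setT in E.
  rewrite [LHS](_ : _ = \int[@lebesgue_measure R]_x ((EFin \o p) \o -%R) x)%E //.
  rewrite -E; last 2 first.
  - exact/measurable_EFinP.
  - by move=> y _; rewrite /= lee_fin.
  apply: eq_measure_integral => A mA _; exact: lebesgue_measureN.
have H : (\int[@lebesgue_measure R]_x (expR (- c * `|x|))%:E <=
   \int[@lebesgue_measure R]_x (c^-1 * (p x + p (- x)))%:E)%E.
  apply: ge0_le_integral => //.
  - apply/measurable_EFinP; apply: measurableT_comp; first exact: measurable_expR.
    apply: measurable_funM => //; exact: normr_measurable.
  - apply/measurable_EFinP; apply: measurable_funM => //.
    exact: measurable_funD.
  move=> x _; rewrite lee_fin /p.
  have [x0|x0] := leP 0 x.
    rewrite (exponential_pdfE _ x0) ger0_norm // mulrDr mulrA mulVf ?gt_eqF// mul1r.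
    by rewrite lerDl; apply: mulr_ge0; [rewrite invr_ge0 ltW // | exact: p0].
  have nx : 0 <= - x by rewrite oppr_ge0 ltW.
  rewrite (@exponential_pdfE _ c (- x) nx) (ltr0_norm x0).
  rewrite mulrDr mulrA mulVf ?gt_eqF// mul1r mulrN mulNr opprK.
  by rewrite lerDr; apply: mulr_ge0; [rewrite invr_ge0 ltW // | exact: p0].
apply: le_lt_trans H _.
under eq_integral do rewrite EFinM.
rewrite ge0_integralZl_EFin //; last 3 first.
- by move=> x _; rewrite lee_fin addr_ge0.
- by apply/measurable_EFinP; exact: measurable_funD.
- by rewrite invr_ge0 ltW.
under eq_integral do rewrite EFinD.
rewrite ge0_integralD //; last 4 first.
- by move=> x _; rewrite lee_fin.
- exact/measurable_EFinP.
- by move=> x _; rewrite lee_fin.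
- exact/measurable_EFinP.
by rewrite Ip IpN -EFinD -EFinM ltry.
Qed.

Lemma int_gexp c : 0 < c -> forall n,
  (\int[lebesgue_tuple n]_v (gexp c v)%:E < +oo)%E.
Proof.
move=> c0; elim=> [|n IH].
  have -> : lebesgue_tuple 0 = \d_([tuple] : 0.-tuple R) by [].
  rewrite integral_dirac //; last first.
    by apply/measurable_EFinP; exact: measurable_gexp.
  by rewrite diracT mul1e ltry.
have [m em] := lebesgue_tuple_measure n.
rewrite em in IH.
rewrite (@lebesgue_tuple_S n m em) integral_ltstep; last 2 first.
- by apply/measurable_EFinP; exact: measurable_gexp.
- by move=> v; rewrite lee_fin expR_ge0.
under eq_integral => x _.
  under eq_integral => t _ do rewrite gexp_cons EFinM.
  rewrite ge0_integralZl_EFin //; last 2 first.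
  - by move=> t _; rewrite lee_fin expR_ge0.
  - by apply/measurable_EFinP; exact: measurable_gexp.
  over.
rewrite ge0_integralZr //; last 2 first.
- apply/measurable_EFinP; apply: measurableT_comp; first exact: measurable_expR.
  by apply: measurable_funM => //; exact: normr_measurable.
- by apply: integral_ge0 => v _; rewrite lee_fin expR_ge0.
apply: lte_mul_pinfty => //.
- by apply: integral_ge0 => v _; rewrite lee_fin expR_ge0.
- rewrite ge0_fin_numE; first exact: int_expabs.
  by apply: integral_ge0 => v _; rewrite lee_fin expR_ge0.
Qed.

Lemma cosh_ge1 (t : R) : 1 <= cosh t.
Proof.
rewrite /cosh ler_pdivlMr // mul1r.
have h1 := expR_ge1Dx t; have h2 := expR_ge1Dx (- t).
lra.
Qed.

Lemma cosh_ge0 (t : R) : 0 <= cosh t.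
Proof. exact: le_trans (cosh_ge1 t). Qed.

Lemma measurable_cosh : measurable_fun setT (@cosh R).
Proof.
rewrite /cosh; apply: measurable_funM => //.
apply: measurable_funD; first exact: measurable_expR.
by apply: measurableT_comp; [exact: measurable_expR| exact: oppr_measurable].
Qed.

Definition kint (nu x : R) : \bar R :=
  (\int[@lebesgue_measure R]_(t in `[0%R, +oo[%classic)
          (expR (- x * cosh t) * cosh (nu * t))%:E)%E.

Lemma besselKE (nu x : R) : besselK nu x = fine (kint nu x).
Proof. by []. Qed.

Lemma kintg_ge0 (nu x t : R) : 0 <= expR (- x * cosh t) * cosh (nu * t).
Proof. by rewrite mulr_ge0 ?expR_ge0 ?cosh_ge0. Qed.

Lemma measurable_kintg (nu x : R) :
  measurable_fun setT (fun t : R => expR (- x * cosh t) * cosh (nu * t)).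
Proof.
apply: measurable_funM.
  apply: measurableT_comp; first exact: measurable_expR.
  by apply: measurable_funM => //; exact: measurable_cosh.
apply: measurableT_comp; first exact: measurable_cosh.
exact: measurable_funM.
Qed.

Lemma kint_ge0 (nu x : R) : (0 <= kint nu x)%E.
Proof. by apply: integral_ge0 => t _; rewrite lee_fin kintg_ge0. Qed.

Lemma kint_fin (nu x : R) : 0 <= nu -> 0 < x -> (kint nu x < +oo)%E.
Proof.
move=> nu0 x0.
pose p := exponential_pdf (1 : R).
pose K := 2 * (nu + 1) ^+ 2 / x.
have H : (kint nu x <= \int[@lebesgue_measure R]_(t in `[0%R, +oo[%classic) ((expR K) * p t)%:E)%E.
  apply: ge0_le_integral => //.
  - by move=> t _; rewrite lee_fin kintg_ge0.
  - apply: measurable_funTS; apply/measurable_EFinP; exact: measurable_kintg.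
  - apply: measurable_funTS; apply/measurable_EFinP; apply: measurable_funM => //.
    exact: measurable_exponential_pdf.
  move=> t; rewrite /= in_itv /= andbT => t0.
  rewrite lee_fin /p exponential_pdfE // mul1r.
  have c1 : cosh (nu * t) <= expR (nu * t).
    rewrite /cosh ler_pdivrMr //.
    have : expR (- (nu * t)) <= expR (nu * t).
      by rewrite ler_expR; have := mulr_ge0 nu0 t0; lra.
    lra.
  have c2 : expR t / 2 <= cosh t.
    by rewrite /cosh ler_pM2r // lerDl expR_ge0.
  have c3 : t ^+ 2 / 4 <= expR t.
    have e2 : expR t = expR (t / 2) ^+ 2 by rewrite expr2 -expRD; congr expR; field.
    rewrite e2; have := expR_ge1Dx (t / 2) => h.
    have : 0 <= 1 + t / 2 by lra.
    move=> h0; apply: le_trans (_ : (1 + t / 2) ^+ 2 <= _).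
      by nra.
    by rewrite ler_sqr // ?nnegrE // (le_trans h0 h).
  apply: (le_trans (y := expR (- x * cosh t) * expR (nu * t))).
    by apply: ler_wpM2l; [exact: expR_ge0|].
  rewrite -!expRD ler_expR.
  have hx : x * (t ^+ 2 / 8) <= x * cosh t.
    rewrite ler_pM2l //. lra.
  rewrite /K.
  have : 0 <= (x * t - 4 * (nu + 1)) ^+ 2 by exact: sqr_ge0.
  move=> hsq.
  rewrite -subr_ge0.
  have -> : 2 * (nu + 1) ^+ 2 / x + -1 * t - (- x * cosh t + nu * t)
      = (x * cosh t - x * (t ^+ 2 / 8)) + (x * t - 4 * (nu + 1)) ^+ 2 / (8 * x).
    by field; rewrite gt_eqF.
  apply: addr_ge0; first by rewrite subr_ge0.
  by apply: divr_ge0 => //; rewrite mulr_ge0 // ltW.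
apply: le_lt_trans H _.
have pp0 : forall t, `[0%R, +oo[%classic t -> (0 <= (p t)%:E)%E.
  by move=> t _; rewrite lee_fin exponential_pdf_ge0.
have mp : measurable_fun (`[0%R, +oo[%classic : set R) (EFin \o p).
  apply: measurable_funTS; apply/measurable_EFinP.
  exact: measurable_exponential_pdf.
have eK : 0 <= expR K by exact: expR_ge0.
under eq_integral do rewrite EFinM.
rewrite ge0_integralZl_EFin //.
apply: lte_mul_pinfty => //.
apply: le_lt_trans (_ : _ <= \int[@lebesgue_measure R]_t (p t)%:E)%E _.
  apply: ge0_subset_integral => //.
  - apply/measurable_EFinP; exact: measurable_exponential_pdf.
  - by move=> t _; rewrite lee_fin exponential_pdf_ge0.
by rewrite integral_exponential_pdf // ltry.
Qed.


Lemma besselK_ge0 (nu x : R) : 0 <= besselK nu x.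
Proof. exact/fine_ge0/kint_ge0. Qed.

Lemma kint_fin_num (nu x : R) : 0 <= nu -> 0 < x -> kint nu x \is a fin_num.
Proof. by move=> nu0 x0; rewrite ge0_fin_numE ?kint_fin ?kint_ge0. Qed.

Lemma besselK_decay (nu x0 x : R) : 0 <= nu -> 0 < x0 -> x0 <= x ->
  besselK nu x <= expR (- x / 2) * besselK nu (x0 / 2).
Proof.
move=> nu0 x00 xx0.
have x0' : 0 < x0 / 2 by rewrite divr_gt0.
have x0x : 0 < x by apply: lt_le_trans xx0.
have Jf := @kint_fin_num nu (x0 / 2) nu0 x0'.
have I1 : (kint nu x <= (expR (- x / 2) * besselK nu (x0 / 2))%:E)%E.
  have k0 : forall t, (`[0%R, +oo[%classic : set R) t ->
      (0 <= (expR (- (x0 / 2) * cosh t) * cosh (nu * t))%:E)%E.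
    by move=> t _; rewrite lee_fin kintg_ge0.
  have mk : measurable_fun (`[0%R, +oo[%classic : set R)
      (fun t => (expR (- (x0 / 2) * cosh t) * cosh (nu * t))%:E).
    apply: measurable_funTS; apply/measurable_EFinP; exact: measurable_kintg.
  have e0 : 0 <= expR (- x / 2) by exact: expR_ge0.
  rewrite besselKE EFinM fineK // /kint -ge0_integralZl_EFin //.
  apply: ge0_le_integral => //.
  - by move=> t _; rewrite lee_fin kintg_ge0.
  - apply: measurable_funTS; apply/measurable_EFinP; exact: measurable_kintg.
  - apply: measurable_funTS; apply/measurable_EFinP; apply: measurable_funM => //.
    exact: measurable_kintg.
  move=> t _; rewrite -EFinM lee_fin (mulrA (expR (- x / 2))) -expRD.
  apply: ler_wpM2r; first exact: cosh_ge0.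
  rewrite ler_expR.
  have c1 := cosh_ge1 t.
  have : 0 <= (x - x0 / 2) * (cosh t - 1) by apply: mulr_ge0; lra.
  nra.
rewrite besselKE.
apply: (le_trans (y := fine ((expR (- x / 2) * besselK nu (x0 / 2))%:E))); last by [].
apply: fine_le => //; exact: kint_fin_num.
Qed.

Lemma besselK_mono (nu x y : R) : 0 <= nu -> 0 < x -> x <= y ->
  besselK nu y <= besselK nu x.
Proof.
move=> nu0 x0 xy.
have y0 : 0 < y by apply: lt_le_trans xy.
rewrite !besselKE; apply: fine_le; rewrite ?kint_fin_num //.
apply: ge0_le_integral => //.
- by move=> t _; rewrite lee_fin kintg_ge0.
- apply: measurable_funTS; apply/measurable_EFinP; exact: measurable_kintg.
- apply: measurable_funTS; apply/measurable_EFinP; exact: measurable_kintg.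
move=> t _; rewrite lee_fin.
apply: ler_wpM2r; first exact: cosh_ge0.
rewrite ler_expR; have c1 := cosh_ge0 t.
by rewrite !mulNr lerN2 ler_wpM2r.
Qed.


Lemma xlnx_bound (x : R) : 0 <= x -> `|x * ln x| <= 2 * Num.sqrt x + x ^+ 2.
Proof.
move=> x0.
have s0 := sqrtr_ge0 x.
have [->|xpos] := eqVneq x 0.
  by rewrite mul0r normr0 sqrtr0 mulr0 add0r expr0n.
have xp : 0 < x by rewrite lt_def xpos x0.
have [x1|x1] := leP x 1.
  have sp : 0 < Num.sqrt x by rewrite sqrtr_gt0.
  have sx : Num.sqrt x ^+ 2 = x by rewrite sqr_sqrtr.
  have lx : ln x = 2 * ln (Num.sqrt x).
    by rewrite -{1}sx lnXn // mulr_natl.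
  have ls : - ln (Num.sqrt x) <= (Num.sqrt x)^-1 - 1.
    rewrite -lnV ?posrE //.
    have := @le_ln1Dx R ((Num.sqrt x)^-1 - 1).
    have -> : 1 + ((Num.sqrt x)^-1 - 1) = (Num.sqrt x)^-1 by ring.
    apply; have : 0 < (Num.sqrt x)^-1 by rewrite invr_gt0.
    lra.
  rewrite ler0_norm; last by rewrite mulr_ge0_le0 // ln_le0.
  rewrite lx.
  have e : - (x * (2 * ln (Num.sqrt x))) = 2 * x * (- ln (Num.sqrt x)) by ring.
  rewrite e.
  apply: (le_trans (y := 2 * x * ((Num.sqrt x)^-1 - 1))).
    by apply: ler_wpM2l => //; rewrite mulr_ge0.
  have e2 : 2 * (Num.sqrt x ^+ 2) * ((Num.sqrt x)^-1 - 1) = 2 * Num.sqrt x - 2 * (Num.sqrt x ^+ 2).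
    by field; rewrite gt_eqF.
  rewrite sx in e2.
  rewrite e2.
  have : 0 <= x ^+ 2 by exact: sqr_ge0.
  lra.
have l0 : 0 <= ln x by apply: ln_ge0; exact: ltW.
have l1 : ln x <= x - 1.
  have := @le_ln1Dx R (x - 1).
  have -> : 1 + (x - 1) = x by ring.
  apply; lra.
rewrite ger0_norm ?mulr_ge0 //.
apply: (le_trans (y := x ^+ 2)); last by rewrite lerDr mulr_ge0.
rewrite expr2; apply: ler_wpM2l => //; lra.
Qed.

Definition sqn n (v : n.-tuple R) := sqnorm v.

Lemma sqnorm_ge0 n (v : n.-tuple R) : 0 <= sqnorm v.
Proof. by apply: sumr_ge0 => i _; exact: sqr_ge0. Qed.

Lemma tnth_le_sqnorm n (v : n.-tuple R) i : tnth v i ^+ 2 <= sqnorm v.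
Proof.
rewrite /sqnorm (bigD1 i) //= lerDl.
by apply: sumr_ge0 => j _; exact: sqr_ge0.
Qed.

Lemma measurable_sqnorm n : measurable_fun setT (@sqnorm R n).
Proof.
apply: measurable_sum => i; apply: measurable_funX.
exact: measurable_tnth.
Qed.

Section Density.
Variables (d : nat) (lam u : R).
Hypotheses (d2 : (2 <= d)%N) (lam0 : 0 < lam) (u0 : 0 < u).

Definition hh : R := d%:R / 2.
Definition AA : R := lam / (2 `^ (hh - 1) * pi `^ hh).
Definition Fr (y : R) := AA * (u / Num.max y lam) `^ hh * expR (lam * u)
  * besselK hh (u * Num.max y lam).
Definition BB := AA * (u / lam) `^ hh * expR (lam * u) * besselK hh (u * lam / 2).
Definition rho n (v : n.-tuple R) := Num.sqrt (sqnorm v + lam ^+ 2).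
Arguments rho {n} v.

Lemma hh0 : 0 <= hh.
Proof. by apply: divr_ge0. Qed.

Lemma AA0 : 0 <= AA.
Proof. by apply: divr_ge0; [exact: ltW| apply: mulr_ge0; exact: powR_ge0]. Qed.

Lemma BB0 : 0 <= BB.
Proof.
rewrite /BB; apply: mulr_ge0; [apply: mulr_ge0; [apply: mulr_ge0; [exact: AA0| exact: powR_ge0]| exact: expR_ge0]| exact: besselK_ge0].
Qed.

Lemma Fr_ge0 y : 0 <= Fr y.
Proof.
rewrite /Fr; apply: mulr_ge0; [apply: mulr_ge0; [apply: mulr_ge0; [exact: AA0| exact: powR_ge0]| exact: expR_ge0]| exact: besselK_ge0].
Qed.

Lemma max_ge_lam y : lam <= Num.max y lam.
Proof. by rewrite le_max lexx orbT. Qed.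

Lemma powR_anti (r1 r2 : R) : 0 < r1 -> r1 <= r2 -> (u / r2) `^ hh <= (u / r1) `^ hh.
Proof.
move=> r10 r12.
have r20 : 0 < r2 by apply: lt_le_trans r12.
apply: (ge0_ler_powR hh0).
- by rewrite nnegrE; apply: divr_ge0; apply: ltW.
- by rewrite nnegrE; apply: divr_ge0; apply: ltW.
- by apply: ler_wpM2l; [exact: ltW| rewrite lef_pV2 ?posrE].
Qed.

Lemma Fr_noninc : {homo Fr : x y /~ x <= y}.
Proof.
move=> y x xy; rewrite /Fr.
have mx := max_ge_lam x; have my := max_ge_lam y.
have mxy : Num.max x lam <= Num.max y lam.
  by rewrite ge_max my andbT; apply: (le_trans xy); rewrite le_max lexx.
have mx0 : 0 < Num.max x lam by apply: lt_le_trans mx.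
apply: ler_pM.
- exact: mulr_ge0 (mulr_ge0 AA0 (powR_ge0 _ _)) (expR_ge0 _).
- exact: besselK_ge0.
- apply: ler_wpM2r; first exact: expR_ge0.
  apply: ler_wpM2l; first exact: AA0.
  exact: powR_anti.
- apply: besselK_mono; first exact: hh0.
    exact: mulr_gt0.
  by apply: ler_wpM2l => //; exact: ltW.
Qed.

Lemma Fr_bound y : Fr y <= BB * expR (- (u * Num.max y lam) / 2).
Proof.
rewrite /Fr /BB.
have my := max_ge_lam y.
have ml0 : 0 < Num.max y lam by apply: lt_le_trans my.
have P1 : (u / Num.max y lam) `^ hh <= (u / lam) `^ hh.
  exact: powR_anti.
have K1 : besselK hh (u * Num.max y lam) <=
    expR (- (u * Num.max y lam) / 2) * besselK hh (u * lam / 2).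
  apply: besselK_decay; first exact: hh0.
    exact: mulr_gt0.
  by apply: ler_wpM2l => //; exact: ltW.
have a0 := AA0.
move: P1 K1 a0; generalize AA => a P1 K1 a0.
have p0 := powR_ge0 (u / Num.max y lam) hh.
have p1 := powR_ge0 (u / lam) hh.
have e0 := expR_ge0 (lam * u).
have k0 := besselK_ge0 hh (u * Num.max y lam).
move: P1 K1 p0 p1 e0 k0.
generalize ((u / Num.max y lam) `^ hh) ((u / lam) `^ hh) (expR (lam * u))
  (besselK hh (u * Num.max y lam)) (expR (- (u * Num.max y lam) / 2))
  (besselK hh (u * lam / 2)) => P P0 E K e K0 P1 K1 p0 p1 e0 k0.
have -> : a * P0 * E * K0 * e = a * P0 * E * (e * K0) by ring.
apply: ler_pM => //.
- by apply: mulr_ge0 => //; apply: mulr_ge0.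
- apply: ler_pM => //; first exact: mulr_ge0.
  exact: ler_pM a0 p0 (lexx a) P1.
Qed.

Lemma rho_ge n (v : n.-tuple R) : lam <= rho v.
Proof.
rewrite /rho -{1}(ger0_norm (ltW lam0)) -sqrtr_sqr.
by rewrite ler_sqrt ?addr_ge0 ?sqnorm_ge0 ?sqr_ge0 // lerDr sqnorm_ge0.
Qed.

Lemma densityE (v : (d.-1).-tuple R) : ndfhl_density d lam u v = Fr (rho v).
Proof.
rewrite /ndfhl_density /= /Fr /rho.
have -> : Num.max (Num.sqrt (sqnorm v + lam ^+ 2)) lam = Num.sqrt (sqnorm v + lam ^+ 2).
  by apply/max_idPl; have := @rho_ge _ v; rewrite /rho.
by [].
Qed.

Lemma measurable_rho n : measurable_fun setT (@rho n).
Proof.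
apply: measurableT_comp; first exact: continuous_measurable_fun (@sqrt_continuous R).
by apply: measurable_funD => //; exact: measurable_sqnorm.
Qed.

Lemma sum_abs_le n (v : n.-tuple R) : \sum_(i < n) `|tnth v i| <= n%:R * rho v.
Proof.
apply: (le_trans (y := \sum_(i < n) rho v)).
  apply: ler_sum => i _; rewrite /rho -sqrtr_sqr ler_sqrt ?addr_ge0 ?sqnorm_ge0 ?sqr_ge0 //.
  by apply: le_trans (@tnth_le_sqnorm _ v i) _; rewrite lerDl sqr_ge0.
by rewrite sumr_const card_ord mulr_natl.
Qed.


Lemma density_ge0 (v : (d.-1).-tuple R) : 0 <= ndfhl_density d lam u v.
Proof. by rewrite densityE Fr_ge0. Qed.

Lemma density_le (v : (d.-1).-tuple R) :
  ndfhl_density d lam u v <= BB * gexp (u / (4 * (d.-1)%:R)) v ^+ 2.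
Proof.
have n0 : (0 < d.-1)%N by case: d d2 => [|[|k]].
have N0 : 0 < (d.-1)%:R :> R by rewrite ltr0n.
rewrite densityE.
apply: le_trans (Fr_bound _) _.
apply: ler_wpM2l; first exact: BB0.
rewrite /gexp expr2 -expRD ler_expR.
have S0 : 0 <= \sum_(i < d.-1) `|tnth v i| by apply: sumr_ge0 => i _.
have hS := @sum_abs_le _ v.
have hm : rho v <= Num.max (rho v) lam by rewrite le_max lexx.
have e : - (u / (4 * (d.-1)%:R)) * \sum_(i < d.-1) `|tnth v i| +
         - (u / (4 * (d.-1)%:R)) * \sum_(i < d.-1) `|tnth v i|
  = - (u * ((\sum_(i < d.-1) `|tnth v i|) / (d.-1)%:R)) / 2.
  by field; rewrite gt_eqF.
rewrite e !mulNr lerN2 ler_pM2r ?invr_gt0 //.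
apply: ler_wpM2l; first exact: ltW.
rewrite ler_pdivrMr //.
apply: (le_trans hS); rewrite mulrC; apply: ler_wpM2r; first by rewrite ler0n.
by rewrite le_max lexx.
Qed.

Lemma density_bound (v : (d.-1).-tuple R) :
  `|ndfhl_density d lam u v * ln (ndfhl_density d lam u v)|
    <= (2 * Num.sqrt BB + BB ^+ 2) * gexp (u / (4 * (d.-1)%:R)) v.
Proof.
have f0 := density_ge0 v.
have fl := density_le v.
have b0 := BB0.
move: f0 fl; set f := ndfhl_density d lam u v => f0 fl.
have g0 : 0 <= gexp (u / (4 * (d.-1)%:R)) v by exact: expR_ge0.
have g1 : gexp (u / (4 * (d.-1)%:R)) v <= 1.
  rewrite /gexp expR_le1 mulNr oppr_le0; apply: mulr_ge0.
    by apply: divr_ge0; [exact: ltW| apply: mulr_ge0].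
  by apply: sumr_ge0.
move: g0 g1 fl; set g := gexp _ v => g0 g1 fl.
apply: le_trans (@xlnx_bound f f0) _.
have s1 : Num.sqrt f <= Num.sqrt BB * g.
  apply: (le_trans (y := Num.sqrt (BB * g ^+ 2))).
    by rewrite ler_sqrt // mulr_ge0 // sqr_ge0.
  by rewrite sqrtrM // sqrtr_sqr ger0_norm.
have s2 : f ^+ 2 <= BB ^+ 2 * g.
  apply: (le_trans (y := (BB * g ^+ 2) ^+ 2)).
    by rewrite ler_sqr // nnegrE // mulr_ge0 // sqr_ge0.
  rewrite exprMn; apply: ler_wpM2l; first exact: sqr_ge0.
  rewrite -exprM; have g4 : g ^+ 4 <= g.
    rewrite exprS.
    apply: (le_trans (y := g * 1)); last by rewrite mulr1.
    by apply: ler_wpM2l => //; rewrite exprn_ile1.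
  exact: g4.
have sb := sqrtr_ge0 BB.
nra.
Qed.

End Density.


Lemma main_res (d : nat) (lam u : R) :
  (2 <= d)%N -> 0 < lam -> 0 < u ->
  (lebesgue_tuple d.-1).-integrable setT
     (fun v => (ndfhl_density d lam u v * ln (ndfhl_density d lam u v))%:E)
  /\ diff_entropy d.-1 (ndfhl_density d lam u) \is a fin_num.
Proof.
move=> d2 lam0 u0.
have n0 : (0 < d.-1)%N by case: d d2 => [|[|k]].
have N0 : 0 < (d.-1)%:R :> R by rewrite ltr0n.
set c := u / (4 * (d.-1)%:R).
have c0 : 0 < c by rewrite /c divr_gt0 // mulr_gt0.
set C := 2 * Num.sqrt (BB d lam u) + (BB d lam u) ^+ 2.
have C0 : 0 <= C by apply: addr_ge0; [apply: mulr_ge0 => //; exact: sqrtr_ge0 | exact: sqr_ge0].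
have [m em] := lebesgue_tuple_measure d.-1.
have Ig := @int_gexp c c0 d.-1.
rewrite em in Ig.
rewrite /diff_entropy em.
have mFr : measurable_fun setT (Fr d lam u).
  apply: nonincreasing_measurable => //.
  move=> x y xy; exact: (@Fr_noninc d lam u lam0 u0 y x xy).
have mf : measurable_fun setT (ndfhl_density d lam u).
  have -> : ndfhl_density d lam u = Fr d lam u \o (rho lam d.-1).
    by apply/funext => v /=; rewrite (@densityE d lam u lam0 v).
  apply: measurableT_comp => //; exact: measurable_rho.
have mF : measurable_fun setT
    (fun v => (ndfhl_density d lam u v * ln (ndfhl_density d lam u v))%:E).
  apply/measurable_EFinP; apply: measurable_funM => //.
  by apply: measurableT_comp => //; exact: measurable_ln.
have IG : m.-integrable setT (fun v => (C * gexp c v)%:E).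
  apply/integrableP; split.
    apply/measurable_EFinP; apply: measurable_funM => //.
    exact: measurable_gexp.
  under eq_integral do rewrite abse_EFin ger0_norm ?mulr_ge0 ?expR_ge0 // EFinM.
  rewrite ge0_integralZl_EFin //; last 2 first.
  - by move=> v _; rewrite lee_fin expR_ge0.
  - by apply/measurable_EFinP; exact: measurable_gexp.
  apply: lte_mul_pinfty => //.
have IF : m.-integrable setT
    (fun v => (ndfhl_density d lam u v * ln (ndfhl_density d lam u v))%:E).
  apply: le_integrable IG => //.
  move=> v _; rewrite !abse_EFin lee_fin (ger0_norm (_ : 0 <= C * _)); last first.
    by rewrite mulr_ge0 ?expR_ge0.
  exact: density_bound.
split => //.
rewrite fin_numN; exact: integrable_fin_num.
Qed.

End Meas.

Theorem lemma9 (R : realType) (d : nat) (lam u : R) :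
  (2 <= d)%N -> 0 < lam -> 0 < u ->
  (lebesgue_tuple d.-1).-integrable setT
     (fun v => (ndfhl_density d lam u v * ln (ndfhl_density d lam u v))%:E)
  /\ diff_entropy d.-1 (ndfhl_density d lam u) \is a fin_num.
Proof. exact: main_res. Qed.
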